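(* Let $d$ and $K$ be positive integers, and let $\mathcal P$ be a set consisting either of a single prime or of infinitely many primes. For $k=1,\ldots,K$ let $\{a_{k,n}\}_{n=1}^\infty$ and $\{b_{k,n}\}_{n=1}^\infty$ be sequences of non-zero integers such that $p\nmid\gcd(a_{k,n},b_{k,n})$ for all $p\in\mathcal P$, $k$ and $n$, and such that the partial sums $\alpha_{k,N}=\sum_{n=1}^N\frac{b_{k,n}}{a_{k,n}}$ converge as $N\to\infty$. Set $a_{0,n}=1$. Suppose that for each $k=1,\ldots,K$ and each $p\in\mathcal P$: for every $N\in\mathbb N$ there is exactly one $n\le N$ with $\nu_p(a_{k,n})=\max_{1\le m\le N}\nu_p(a_{k,m})$, and for all sufficiently large $N$, \[\max_{1\le n\le N}\nu_p(a_{k,n})>d\max_{1\le n\le N}\nu_p(a_{k-1,n}).\] If $\mathcal P=\{p\}$, assume additionally that for each $k=1,\ldots,K$, $\lim_{N\to\infty}\big(\max_{1\le n\le N}\nu_p(a_{k,n})-d\max_{1\le n\le N}\nu_p(a_{k-1,n})\big)=\infty$. Let $P\in\mathbb Z[x_1,\ldots,x_K]$ be a non-zero polynomial of degree at most $d$. Then $P(\alpha_{1,N},\ldots,\alpha_{K,N})\ne0$ for all sufficiently large $N$.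
   Context: $\nu_p$ denotes the $p$-adic valuation. *)

(* Defs.v *)
From HB Require Import structures.
From mathcomp Require Import all_boot all_order all_algebra.
From mathcomp Require Import mpoly.
From mathcomp Require Import reals Rstruct.
Set Implicit Arguments. Unset Strict Implicit. Unset Printing Implicit Defensive.
Import Order.TTheory GRing.Theory Num.Theory.
Local Open Scope ring_scope.

(* p-adic valuation of an integer (for nonzero z; nu_p 0 = 0 by convention) *)
Definition nu (p : nat) (z : int) : nat := logn p `|z|%N.

Definition maxnu (p : nat) (a : nat -> int) (N : nat) : nat :=
  (\max_(1 <= n < N.+1) nu p (a n))%N.

Definition psum (a b : nat -> int) (N : nat) : rat :=
  \sum_(1 <= n < N.+1) (b n)%:~R / (a n)%:~R.

Definition converges (u : nat -> rat) : Prop :=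
  exists l : Rdefinitions.R, forall e : Rdefinitions.R, 0 < e ->
    exists N0 : nat, forall N : nat, (N0 <= N)%N ->
      `|(ratr (u N) : Rdefinitions.R) - l| < e.

Definition ext0 (a : nat -> nat -> int) (k : nat) : nat -> int :=
  if k == 0%N then (fun _ => 1) else a k.

(* Main.v *)
Require Import Defs.
From HB Require Import structures.
From mathcomp Require Import all_boot all_order all_algebra.
From mathcomp Require Import mpoly.
From mathcomp Require Import reals Rstruct.
From mathcomp Require Import ring zify.
Import Order.TTheory GRing.Theory Num.Theory.
Set Implicit Arguments. Unset Strict Implicit.
Local Open Scope ring_scope.
Section Val.
Variable p : nat.
Hypothesis pP : prime p.

Definition vge (x : rat) (e : int) := exists m n : int,
  ~~ (p%:Z %| n)%Z /\ x = (p%:R : rat) ^ e * m%:~R / n%:~R.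
Definition hasv (x : rat) (e : int) := exists m n : int,
  ~~ (p%:Z %| m)%Z /\ ~~ (p%:Z %| n)%Z /\ x = (p%:R : rat) ^ e * m%:~R / n%:~R.

Lemma ndvd1 : ~~ (p%:Z %| 1)%Z.
Proof. rewrite dvdzE /= dvdn1; apply/eqP => h; move: (prime_gt1 pP); by rewrite h. Qed.

Lemma ndvd_neq0 (n : int) : ~~ (p%:Z %| n)%Z -> n%:~R != 0 :> rat.
Proof. by apply: contra; rewrite intr_eq0 => /eqP ->; rewrite dvdz0. Qed.

Lemma ndvdM (m n : int) : ~~ (p%:Z %| m)%Z -> ~~ (p%:Z %| n)%Z -> ~~ (p%:Z %| m * n)%Z.
Proof.
rewrite !dvdzE /= abszM Euclid_dvdM // negb_or => -> ->; done.
Qed.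

Lemma pneq0 : (p%:R : rat) != 0.
Proof. by rewrite pnatr_eq0 -lt0n prime_gt0. Qed.

Lemma hasv_neq0 x e : hasv x e -> x != 0.
Proof.
move=> [m [n [hm [hn ->]]]].
rewrite !mulf_neq0 ?invr_eq0 ?ndvd_neq0 // expfz_neq0 // pneq0 //.
Qed.

Lemma hasv_vge x e : hasv x e -> vge x e.
Proof. by move=> [m [n [hm [hn ->]]]]; exists m, n. Qed.

Lemma vge0 e : vge 0 e.
Proof.
exists 0, 1; split; last by rewrite mulr0 mul0r.
exact: ndvd1.
Qed.

Lemma vgeD x y e : vge x e -> vge y e -> vge (x + y) e.
Proof.
move=> [m [n [hn ->]]] [m' [n' [hn' ->]]].
exists (m * n' + m' * n), (n * n'); split; first exact: ndvdM.
have h1 := ndvd_neq0 hn; have h2 := ndvd_neq0 hn'.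
rewrite !rmorphD !rmorphM /=. field. by rewrite h1 h2.
Qed.

Lemma vge_le x e e' : vge x e -> (e' <= e) -> vge x e'.
Proof.
move=> [m [n [hn ->]]] le.
have [k ->] : exists k : nat, e = e' + k%:Z.
  by exists `|e - e'|%N; rewrite gez0_abs ?subr_ge0 // addrCA subrr addr0.
exists (m * (p ^ k)%N%:Z), n; split => //.
rewrite expfzDr ?pneq0 // rmorphM /= -exprnP -pmulrn natrX; ring.
Qed.

Lemma hasvD x y e : hasv x e -> vge y (e + 1) -> hasv (x + y) e.
Proof.
move=> [m [n [hm [hn ->]]]] [m' [n' [hn' ->]]].
exists (m * n' + p%:Z * m' * n), (n * n'); split; last split.
- rewrite rpredDr ?ndvdM //. by rewrite -mulrA dvdz_mulr.
- exact: ndvdM.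
have h1 := ndvd_neq0 hn; have h2 := ndvd_neq0 hn'.
rewrite expfzDr ?pneq0 // expr1z !rmorphD !rmorphM /=. field. by rewrite h1 h2.
Qed.

Lemma hasvM x y e f : hasv x e -> hasv y f -> hasv (x * y) (e + f).
Proof.
move=> [m [n [hm [hn ->]]]] [m' [n' [hm' [hn' ->]]]].
exists (m * m'), (n * n'); split; last split; try exact: ndvdM.
have h1 := ndvd_neq0 hn; have h2 := ndvd_neq0 hn'.
rewrite expfzDr ?pneq0 // !rmorphM /=. field. by rewrite h1 h2.
Qed.

Lemma hasv1 : hasv 1 0.
Proof.
have h1 : ~~ (p%:Z %| 1)%Z.
  exact: ndvd1.
exists 1, 1; split; first exact: h1; split; first exact: h1.
by rewrite expr0z mul1r.
Qed.

Lemma hasvX x e k : hasv x e -> hasv (x ^+ k) (e * k%:Z).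
Proof.
move=> h; elim: k => [|k IH]; first by rewrite expr0 mulr0; exact: hasv1.
by rewrite exprS -addn1 PoszD mulrDr mulr1 addrC; apply: hasvM.
Qed.

Lemma hasv_int (c : int) : c != 0 -> hasv c%:~R (logn p `|c|)%:Z.
Proof.
move=> c0; have cp : (0 < `|c|)%N by rewrite absz_gt0.
have [m cm em] := pfactor_coprime pP cp.
exists ((-1) ^+ (c < 0)%R * m%:Z), 1; split; last split.
- rewrite dvdzE abszMsign /=. by rewrite -prime_coprime.
- exact: ndvd1.
set L := logn p `|c|.
rewrite divr1 {1}[c]intEsign em PoszM !rmorphM /= -exprnP -!pmulrn natrX; ring.
Qed.

Lemma vge_intr (c : int) : vge c%:~R 0.
Proof.
exists c, 1; split.
  exact: ndvd1.
by rewrite expr0z mul1r divr1.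
Qed.

End Val.

Lemma hasvV p x e : prime p -> hasv p x e -> hasv p x^-1 (- e).
Proof.
move=> pP [m [n [hm [hn ->]]]]; exists n, m; split => //; split => //.
have h1 := ndvd_neq0 hn; have h2 := ndvd_neq0 hm.
rewrite -invr_expz !invfM invrK; ring.
Qed.

Lemma vgeM p x y e f : prime p -> vge p x e -> hasv p y f -> vge p (x * y) (e + f).
Proof.
move=> pP [m [n [hn ->]]] [m' [n' [hm' [hn' ->]]]].
exists (m * m'), (n * n'); split; first exact: ndvdM.
have h1 := ndvd_neq0 hn; have h2 := ndvd_neq0 hn'.
rewrite expfzDr ?pneq0 // !rmorphM /=. field. by rewrite h1 h2.
Qed.

Lemma logn_ndvd p n : ~~ (p %| n)%N -> logn p n = 0%N.
Proof.
move=> h; apply/eqP; rewrite -leqn0 leqNgt logn_gt0 mem_primes.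
by rewrite (negbTE h) !andbF.
Qed.

Lemma vge_sum p (I : eqType) (r : seq I) (Q : pred I) F e : prime p ->
  (forall i, i \in r -> Q i -> vge p (F i) e) -> vge p (\sum_(i <- r | Q i) F i) e.
Proof.
move=> pP h; rewrite big_seq_cond; apply: (big_ind (fun x => vge p x e)).
- exact: vge0.
- by move=> x y; apply: vgeD.
by move=> i /andP[]; apply: h.
Qed.

Lemma hasv_psum p (a b : nat -> int) N n0 : prime p ->
  (1 <= n0 <= N)%N -> (0 < nu p (a n0))%N ->
  (forall n, (1 <= n <= N)%N -> a n != 0) ->
  (forall n, (1 <= n <= N)%N -> n != n0 -> (nu p (a n) < nu p (a n0))%N) ->
  ~~ (p%:Z %| b n0)%Z ->
  hasv p (psum a b N) (- (nu p (a n0))%:Z).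
Proof.
move=> pP hn0 hM ha hlt hb.
rewrite /psum (bigD1_seq n0) ?iota_uniq //; last first.
  by rewrite mem_index_iota ltnS.
have h1 : hasv p ((b n0)%:~R / (a n0)%:~R) (- (nu p (a n0))%:Z).
  rewrite -[- _]add0r; apply: hasvM => //.
    have := hasv_int pP (c := b n0); rewrite (logn_ndvd hb).
    apply; apply: contra hb => /eqP ->; exact: dvdz0.
  apply: hasvV => //; apply: hasv_int => //; apply: ha; done.
have h2 : vge p (\sum_(i <- index_iota 1 N.+1 | i != n0) ((b i)%:~R / (a i)%:~R))
   (- (nu p (a n0))%:Z + 1).
  apply: vge_sum => // n; rewrite mem_index_iota ltnS => hn nn0.
  have := hlt n hn nn0; rewrite /nu => hl.
  apply: (@vge_le _ _ _ (0 + - (logn p `|a n|)%:Z)) => //.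
    apply: vgeM => //; first exact: vge_intr.
    apply: hasvV => //; apply: hasv_int => //; apply: ha; done.
  rewrite add0r; lia.
exact: hasvD.
Qed.

Lemma hasv_alpha p (a b : nat -> int) N : prime p -> (0 < maxnu p a N)%N ->
  (forall n, (1 <= n <= N)%N -> a n != 0) ->
  (forall n, (1 <= n <= N)%N -> ~~ (p %| gcdn `|a n| `|b n|)%N) ->
  (exists! n, (1 <= n <= N)%N /\ nu p (a n) = maxnu p a N) ->
  hasv p (psum a b N) (- (maxnu p a N)%:Z).
Proof.
move=> pP hM ha hg [n0 [[hn0 heq] huq]].
rewrite -heq; apply: hasv_psum => //; first by rewrite heq.
  move=> n hn nn0; rewrite heq ltn_neqAle; apply/andP; split.
    apply/negP => /eqP he; move: nn0; rewrite (huq n) ?eqxx //.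
  rewrite /maxnu; apply: (@leq_bigmax_seq _ _ xpredT (fun n => nu p (a n)) n) => //.
  by rewrite mem_index_iota ltnS.
have := hg n0 hn0; apply: contra => hb.
rewrite dvdn_gcd; apply/andP; split => //.
move: hM; rewrite -heq /nu logn_gt0 mem_primes => /and3P[] //.
Qed.

Lemma ev_all (Kk : nat) (Q : nat -> nat -> Prop) :
  (forall k, (1 <= k <= Kk)%N -> exists N0, forall N, (N0 <= N)%N -> Q k N) ->
  exists N0, forall N, (N0 <= N)%N -> forall k, (1 <= k <= Kk)%N -> Q k N.
Proof.
elim: Kk => [|Kk IH] h.
  by exists 0%N => N _ k /andP[h1 h2]; move: (leq_trans h1 h2).
have [N1 h1] := IH (fun k hk => h k (ltac:(move: hk => /andP[? ?]; apply/andP; split => //; exact: leqW))).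
have [N2 h2] := h Kk.+1 (ltac:(by rewrite leqnn andbT)).
exists (maxn N1 N2) => N hN k /andP[hk1 hk2].
move: hk2; rewrite leq_eqVlt => /orP[/eqP ->|hk].
  by apply: h2; apply: leq_trans hN; apply: leq_maxr.
apply: h1; first by apply: leq_trans hN; apply: leq_maxl.
by rewrite hk1 -ltnS.
Qed.

Lemma maxnu1 p N : maxnu p (fun _ => 1) N = 0%N.
Proof. by rewrite /maxnu big1 // => n _; rewrite /nu /= logn1. Qed.

Lemma exists_min (T : eqType) (s : seq T) (f : T -> int) : s != [::] ->
  exists2 x, x \in s & forall y, y \in s -> f x <= f y.
Proof.
elim: s => [//|x s IH] _.
case: (eqVneq s [::]) => [->|sn].
  by exists x; rewrite ?inE // => y; rewrite inE => /eqP ->.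
have [z zs hz] := IH sn.
case: (leP (f x) (f z)) => hxz.
  exists x; rewrite ?inE ?eqxx // => y; rewrite inE => /orP[/eqP ->//|ys].
  exact: le_trans hxz (hz y ys).
exists z; rewrite ?inE ?zs ?orbT // => y; rewrite inE => /orP[/eqP ->|ys].
  exact: ltW.
exact: hz.
Qed.

Definition Mp (M : nat -> nat) (j : nat) : nat := if j is j'.+1 then M j' else 0%N.

Section Comb.
Variables (M : nat -> nat) (B d : nat).
Hypothesis d0 : (0 < d)%N.

Lemma Mmono k : (forall j, (j < k)%N -> (B + d * Mp M j < M j)%N) ->
  forall i j, (i <= j)%N -> (j < k)%N -> (M i <= M j)%N.
Proof.
move=> hg i j; elim: j => [|j IH].
  by rewrite leqn0 => /eqP ->.
rewrite leq_eqVlt => /orP[/eqP -> //|]; rewrite ltnS => hij hj.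
have := hg j.+1 hj; rewrite /= => h.
have := IH hij (ltnW hj). nia.
Qed.

Lemma Sbound k (e : nat -> nat) : (forall j, (j < k.+1)%N -> (B + d * Mp M j < M j)%N) ->
  (\sum_(j < k.+1) e j <= d)%N -> (\sum_(j < k.+1) e j * M j <= d * M k)%N.
Proof.
move=> hg hs.
apply: (@leq_trans (\sum_(j < k.+1) e j * M k)).
  apply: leq_sum => j _; apply: leq_mul => //; apply: (Mmono hg) => //.
  by rewrite -ltnS.
by rewrite -big_distrl /= leq_mul2r hs orbT.
Qed.

Lemma bnd0 k (f : nat -> nat) : (forall j, (j < k)%N -> (B + d * Mp M j < M j)%N) ->
  (\sum_(j < k) f j <= d)%N -> (\sum_(j < k) f j * M j <= d * Mp M k)%N.
Proof.
case: k => [|k] hg hf; first by rewrite big_ord0.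
exact: Sbound.
Qed.

Lemma comb k (e e' : nat -> nat) :
  (forall j, (j < k)%N -> (B + d * Mp M j < M j)%N) ->
  (\sum_(j < k) e j <= d)%N -> (\sum_(j < k) e' j <= d)%N ->
  (exists j, (j < k)%N /\ e j != e' j) ->
  (\sum_(j < k) e j * M j + B < \sum_(j < k) e' j * M j)%N \/
  (\sum_(j < k) e' j * M j + B < \sum_(j < k) e j * M j)%N.
Proof.
elim: k => [|k IH] hg hs hs' [j0 [hj0 hne]]; first by [].
rewrite !big_ord_recr /=.
move: hs hs'; rewrite !big_ord_recr /= => hs hs'.
have hgk := hg k (ltnSn k).
have hg' : forall j, (j < k)%N -> (B + d * Mp M j < M j)%N.
  by move=> j hj; apply: hg; apply: ltnW.
have bnd : forall f : nat -> nat, (\sum_(j < k) f j <= d)%N ->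
    (\sum_(j < k) f j * M j <= d * Mp M k)%N.
  by move=> f; apply: bnd0.
have hsk : (\sum_(j < k) e j <= d)%N by apply: leq_trans hs; apply: leq_addr.
have hsk' : (\sum_(j < k) e' j <= d)%N by apply: leq_trans hs'; apply: leq_addr.
have bS := bnd e hsk; have bS' := bnd e' hsk'.
move: bS bS' (IH hg' hsk hsk').
set S := \sum_(j < k) e j * M j; set S' := \sum_(j < k) e' j * M j.
clearbody S S' => bS bS' IH'.
case: (ltngtP (e k) (e' k)) => hk.
- left. have : (M k + e k * M k <= e' k * M k)%N.
    by rewrite -mulSn leq_mul2r hk orbT.
  lia.
- right. have : (M k + e' k * M k <= e k * M k)%N.
    by rewrite -mulSn leq_mul2r hk orbT.
  lia.
- have : exists j, (j < k)%N /\ e j != e' j.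
    exists j0; split => //. move: hj0; rewrite ltnS leq_eqVlt => /orP[/eqP hj|//].
    by move: hne; rewrite hj hk eqxx.
  move=> ex; have [h|h] := IH' ex; [left|right]; rewrite hk; lia.
Qed.
End Comb.

Lemma core d K (P : {mpoly int[K]}) (a b : nat -> nat -> int) p B N :
  prime p -> (0 < d)%N -> P != 0 -> (msize P <= d.+1)%N ->
  (forall k n, (1 <= k <= K)%N -> (1 <= n)%N -> a k n != 0) ->
  (forall k n, (1 <= k <= K)%N -> (1 <= n)%N ->
            ~~ (p %| gcdn `|a k n| `|b k n|)%N) ->
  (forall k, (1 <= k <= K)%N ->
      exists! n : nat, (1 <= n <= N)%N /\ nu p (a k n) = maxnu p (a k) N) ->
  (forall k, (1 <= k <= K)%N -> (B + d * maxnu p (ext0 a k.-1) N < maxnu p (a k) N)%N) ->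
  (forall m, m \in msupp P -> (logn p `|P@_m| <= B)%N) ->
  (map_mpoly intr P).@[fun i : 'I_K => psum (a i.+1) (b i.+1) N] != 0 :> rat.
Proof.
move=> pP d0 P0 hPdeg ha0 hgcd huniq hgap hcoef.
pose M := fun j : nat => maxnu p (a j.+1) N.
have hal : forall i : 'I_K, hasv p (psum (a i.+1) (b i.+1) N) (- (M i)%:Z).
  move=> i; have hi : (1 <= i.+1 <= K)%N by rewrite ltn_ord.
  apply: hasv_alpha => //.
  - have := hgap _ hi; rewrite /M; lia.
  - by move=> n /andP[h1 _]; apply: ha0.
  - by move=> n /andP[h1 _]; apply: hgcd.
  - exact: huniq.
set v := fun i : 'I_K => psum (a i.+1) (b i.+1) N.
rewrite mevalE (perm_big _ (msupp_map_mpoly _ intr_inj)) /=.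
under eq_bigr do rewrite mcoeff_map_mpoly.
pose f := fun m : 'X_{1..K} => (logn p `|P@_m|)%:Z - (\sum_(i < K) m i * M i)%N%:Z.
have hT : forall m, m \in msupp P ->
    hasv p ((P@_m)%:~R * \prod_i v i ^+ m i) (f m).
  move=> m hm; apply: hasvM => //.
    by apply: hasv_int => //; rewrite -mcoeff_msupp.
  apply: (big_ind2 (fun x (e : nat) => hasv p x (- e%:Z))).
  - by rewrite oppr0; apply: hasv1.
  - move=> x1 e1 x2 e2 h1 h2; have := hasvM pP h1 h2.
    by rewrite PoszD opprD.
  - move=> i _; have := hasvX pP (m i) (hal i).
    by rewrite mulNr PoszM mulrC.
have [ms hms hmin] := @exists_min _ (msupp P) f (ltac:(by rewrite msupp_eq0)).
pose em := fun (mm : 'X_{1..K}) (j : nat) => oapp (fun i : 'I_K => mm i) 0%N (insub j).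
have emE : forall (mm : 'X_{1..K}) (i : 'I_K), em mm (val i) = mm i.
  by move=> mm i; rewrite /em valK.
have sumE : forall mm : 'X_{1..K},
    (\sum_(i < K) mm i * M i = \sum_(j < K) em mm j * M j)%N.
  by move=> mm; apply: eq_bigr => i _; rewrite emE.
have degE : forall mm, mm \in msupp P -> (\sum_(j < K) em mm j <= d)%N.
  move=> mm hm; have := msize_mdeg_lt hm; rewrite mdegE.
  under eq_bigr do rewrite -emE.
  move=> h; rewrite -ltnS; exact: leq_trans h hPdeg.
have hgr : forall j, (j < K)%N -> (B + d * Mp M j < M j)%N.
  move=> j hj; have hk : (1 <= j.+1 <= K)%N by rewrite hj.
  have := hgap _ hk; rewrite /M /=.
  case: j {hj hk} => [|j]; first by rewrite /ext0 /= maxnu1.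
  by rewrite /ext0 /=.
have hstrict : forall m, m \in msupp P -> m != ms -> f ms < f m.
  move=> m hm hne; have hle := hmin m hm.
  have ex : exists j, (j < K)%N /\ em m j != em ms j.
    case: (boolP [exists i : 'I_K, m i != ms i]) => [/existsP [i hi] | /existsPn h].
      by exists (val i); rewrite !emE ltn_ord.
    have e : m = ms by apply/mnmP => i; apply/eqP; move/negPn: (h i).
    by move: hne; rewrite e eqxx.
  have hc := comb d0 hgr (degE _ hm) (degE _ hms) ex.
  have c1 := hcoef _ hm; have c2 := hcoef _ hms.
  move: hle; rewrite /f !sumE; lia.
rewrite (bigD1_seq ms) ?msupp_uniq //=.
apply: (@hasv_neq0 p pP _ (f ms)).
apply: hasvD => //; first by apply: hT.
apply: vge_sum => // m hm hne.
apply: (@vge_le _ _ _ (f m)) => //; first by apply: hasv_vge; apply: hT.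
have := hstrict m hm hne; lia.
Qed.

Theorem lemma9
  (d K : nat) (Pset : nat -> Prop) (a b : nat -> nat -> int)
  (P : {mpoly int[K]})
  (hd : (0 < d)%N) (hK : (0 < K)%N)
  (hPprime : forall p, Pset p -> prime p)
  (hPshape : (exists p, forall q, Pset q <-> q = p) \/
             (forall m : nat, exists p, (m < p)%N /\ Pset p))
  (ha0 : forall k n, (1 <= k <= K)%N -> (1 <= n)%N -> a k n != 0)
  (hb0 : forall k n, (1 <= k <= K)%N -> (1 <= n)%N -> b k n != 0)
  (hgcd : forall p k n, Pset p -> (1 <= k <= K)%N -> (1 <= n)%N ->
            ~~ (p %| gcdn `|a k n| `|b k n|)%N)
  (hconv : forall k, (1 <= k <= K)%N -> converges (psum (a k) (b k)))
  (huniq : forall p k N, Pset p -> (1 <= k <= K)%N -> (1 <= N)%N ->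
      exists! n : nat, (1 <= n <= N)%N /\ nu p (a k n) = maxnu p (a k) N)
  (hgrow : forall p k, Pset p -> (1 <= k <= K)%N ->
      exists N0 : nat, forall N : nat, (N0 <= N)%N ->
        (d * maxnu p (ext0 a k.-1) N < maxnu p (a k) N)%N)
  (hsingle : forall p, (forall q, Pset q <-> q = p) ->
      forall k, (1 <= k <= K)%N -> forall B : nat,
        exists N0 : nat, forall N : nat, (N0 <= N)%N ->
          (B + d * maxnu p (ext0 a k.-1) N < maxnu p (a k) N)%N)
  (hP0 : P != 0) (hPdeg : (msize P <= d.+1)%N) :
  exists N0 : nat, forall N : nat, (N0 <= N)%N ->
    (map_mpoly intr P).@[fun i : 'I_K => psum (a i.+1) (b i.+1) N] != 0 :> rat.
Proof.
case: hPshape => [[p hp] | hinf].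
  have Pp : Pset p by apply/hp.
  have pP := hPprime p Pp.
  pose B := (\max_(m <- msupp P) logn p `|P@_m|)%N.
  have [N0 hN0] := @ev_all K (fun k N => (B + d * maxnu p (ext0 a k.-1) N < maxnu p (a k) N)%N)
    (fun k hk => hsingle p hp k hk B).
  exists (maxn N0 1) => N hN.
  have hN1 : (1 <= N)%N by apply: leq_trans hN; apply: leq_maxr.
  apply: (@core d K P a b p B N) => //.
  - by move=> k n hk hn; apply: hgcd.
  - by move=> k hk; apply: huniq.
  - by move=> k hk; apply: hN0 => //; apply: leq_trans hN; apply: leq_maxl.
  - by move=> m hm; rewrite /B; apply: (@leq_bigmax_seq _ _ xpredT (fun m => logn p `|P@_m|) m).
pose m0 := (\max_(m <- msupp P) `|P@_m|)%N.
have [p [hp Pp]] := hinf m0.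
have pP := hPprime p Pp.
have [N0 hN0] := @ev_all K (fun k N => (0 + d * maxnu p (ext0 a k.-1) N < maxnu p (a k) N)%N)
    (fun k hk => hgrow p k Pp hk).
exists (maxn N0 1) => N hN.
have hN1 : (1 <= N)%N by apply: leq_trans hN; apply: leq_maxr.
apply: (@core d K P a b p 0 N) => //.
- by move=> k n hk hn; apply: hgcd.
- by move=> k hk; apply: huniq.
- by move=> k hk; apply: hN0 => //; apply: leq_trans hN; apply: leq_maxl.
move=> m hm; rewrite logn_ndvd //.
have hle : (`|P@_m| <= m0)%N.
  by rewrite /m0; apply: (@leq_bigmax_seq _ _ xpredT (fun m => `|P@_m|%N) m).
have hpos : (0 < `|P@_m|)%N by rewrite absz_gt0 -mcoeff_msupp.
apply/negP => /(dvdn_leq hpos); lia.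
Qed.
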